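(* Let $\varepsilon>0$, $\beta\in(0,1)$ and let $G$ be a graph with at least one edge. Run the following randomized procedure: set $T=-\frac{4}{\varepsilon}\ln\frac{2}{\beta}$ and $\tilde T=T+\mathrm{Lap}(2/\varepsilon)$; for $\tau=1,2,3,\dots$ compute $\tilde Q_\tau=Q_{\mathrm{Del\text{-}Deg}}(G,\tau)+\mathrm{Lap}(2/\varepsilon)$ (fresh independent noise each time) and output the first $\tau$ with $\tilde Q_\tau>\tilde T$. Then with probability at least $1-\beta$, the output $\tau$ satisfies $\tau\le\deg(G)$ and $$|Q_{\mathrm{Del\text{-}Deg}}(G,\tau)|\le\frac{4}{\varepsilon}\ln\deg(G)+\frac{8}{\varepsilon}\ln\frac{2}{\beta}.$$
   Context: Graphs are finite, simple, undirected; $\deg_G(v)$ is the degree of $v$ and $\deg(G)$ the maximum degree. $Q_{\mathrm{Del\text{-}Deg}}(G,\tau)=-\tfrac12\sum_{v:\deg_G(v)\ge\tau}(\deg_G(v)-\tau)$. $\mathrm{Lap}(b)$ denotes a random variable with density $\frac{1}{2b}e^{-|x|/b}$; all Laplace draws are independent. *)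

(* Defs.v *)
From HB Require Import structures.
From mathcomp Require Import all_boot all_order all_algebra.
From mathcomp Require Import all_classical all_reals all_analysis.
Set Implicit Arguments.
Unset Strict Implicit.
Unset Printing Implicit Defensive.
Import Order.TTheory GRing.Theory Num.Theory.
Local Open Scope classical_set_scope.
Local Open Scope ring_scope.

Definition simple_graph (V : finType) (e : rel V) : Prop :=
  irreflexive e /\ symmetric e.

Definition deg (V : finType) (e : rel V) (v : V) : nat := #|[set u | e v u]|.

Definition maxdeg (V : finType) (e : rel V) : nat := \max_(v : V) deg e v.

Definition Q_del_deg (R : realType) (V : finType) (e : rel V) (tau : nat) : R :=
  - (1 / 2) * \sum_(v : V | (tau <= deg e v)%N) ((deg e v)%:R - tau%:R).

Definition laplace_pdf (R : realType) (b x : R) : R :=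
  (2 * b)^-1 * expR (- `|x| / b).

Definition is_laplace d (T : measurableType d) (R : realType) (P : probability T R)
    (X : {RV P >-> R}) (b : R) : Prop :=
  forall A : set R, measurable A ->
    distribution P X A = (\int[lebesgue_measure]_(x in A) (laplace_pdf b x)%:E)%E.

Definition mutually_independent d (T : measurableType d) (R : realType)
    (P : probability T R) (X : nat -> {RV P >-> R}) : Prop :=
  forall (J : seq nat), uniq J ->
  forall A : nat -> set R, (forall i, measurable (A i)) ->
    P (\bigcap_(i in [set j | j \in J]) (X i @^-1` A i))
    = (\prod_(i <- J) P (X i @^-1` A i))%E.

(** Noise: W 0 is the threshold noise, W tau (tau >= 1) is the noise of the
    tau-th query.  [svt_outputs ... w tau] says that on the noise outcome
    [w], the procedure outputs [tau], i.e. [tau] is the first [tau >= 1]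
    with  Q(G,tau) + W tau > T + W 0,  where T = -(4/eps) ln(2/beta). *)
Definition svt_threshold (R : realType) (eps beta : R) : R :=
  - (4 / eps) * ln (2 / beta).

Definition svt_outputs (R : realType) (V : finType) (e : rel V) (eps beta : R)
    (w : nat -> R) (tau : nat) : Prop :=
  let Tt := svt_threshold eps beta + w 0%N in
  [/\ (0 < tau)%N,
      (forall s : nat, (0 < s)%N -> (s < tau)%N -> Q_del_deg R e s + w s <= Tt)
    & Tt < Q_del_deg R e tau + w tau].

(* Main.v *)
Require Import Defs.
From HB Require Import structures.
From mathcomp Require Import all_boot all_order all_algebra.
From mathcomp Require Import all_classical all_reals all_analysis.
From mathcomp Require Import ring lra measurable_realfun.
Import Order.TTheory GRing.Theory Num.Theory.
Import numFieldNormedType.Exports.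
Local Open Scope classical_set_scope.
Local Open Scope ring_scope.

Section tail.
Context {R : realType}.
Variable b : R.
Hypothesis b0 : 0 < b.

Lemma laplace_pdf_ge0 x : 0 <= laplace_pdf b x.
Proof. by rewrite /laplace_pdf mulr_ge0 ?invr_ge0 ?mulr_ge0 ?expR_ge0 // ltW. Qed.

Lemma laplace_pdf_cont : continuous (laplace_pdf b).
Proof.
move=> x; rewrite /laplace_pdf.
apply: cvgMr.
apply: continuous_comp; last exact: continuous_expR.
apply: cvgMl.
apply: continuousN.
exact: norm_continuous.
Qed.

Lemma laplace_pdfN x : laplace_pdf b (- x) = laplace_pdf b x.
Proof. by rewrite /laplace_pdf normrN. Qed.

Let F x : R := 2^-1 * (- expR (- b^-1 * x)).

Lemma laplace_upper a : 0 <= a ->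
  (\int[lebesgue_measure]_(x in `[a, +oo[) (laplace_pdf b x)%:E = (2^-1 * expR (- b^-1 * a))%:E)%E.
Proof.
move=> a0.
have bi : 0 < b^-1 :> R by rewrite invr_gt0.
have cF : continuous F.
  move=> z; apply: cvgMr.
  apply: cvgN; apply: continuous_comp; last exact: continuous_expR.
  apply: cvgMr.
  exact: cvg_id.
rewrite (@ge0_continuous_FTC2y _ _ F a 0).
- by rewrite /F -EFinB sub0r mulrN opprK.
- by move=> x _; exact: laplace_pdf_ge0.
- exact/continuous_subspaceT/laplace_pdf_cont.
- rewrite /F -(mulr0 (2^-1 : R)); apply: cvgMr.
  rewrite -oppr0; apply: cvgN.
  rewrite (_ : (fun x => expR (- b^-1 * x)) =
               (fun z => expR (- z)) \o (fun z => b^-1 * z)); last first.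
    by apply: eq_fun => x; rewrite mulNr.
  apply: (@cvg_comp _ _ _ _ _ _ (pinfty_nbhs R)); last exact: cvgr_expR.
  exact: gt0_cvgMry.
- by move=> z _; exact: ex_derive.
- exact/cvg_at_right_filter/cF.
- move=> z; rewrite in_itv/= andbT => az.
  have z0 : 0 < z by apply: le_lt_trans az.
  rewrite /F (@derive1Ml _ (fun x => - expR (- b^-1 * x))); last exact: ex_derive.
  rewrite (derive1_exponential_pdf (b^-1)); last by rewrite in_itv/= z0.
  rewrite exponential_pdfE ?ltW// /laplace_pdf gtr0_norm// invfM mulrA.
  by congr (_ * expR _); ring.
Qed.
Lemma laplace_lower a : 0 <= a ->
  (\int[lebesgue_measure]_(x in `]-oo, (- a)%R]) (laplace_pdf b x)%:E = (2^-1 * expR (- b^-1 * a))%:E)%E.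
Proof.
move=> a0; rewrite ge0_integration_by_substitutionNy.
- rewrite -(laplace_upper _ a0); apply: eq_integral => x _ /=.
  by rewrite laplace_pdfN.
- exact/continuous_subspaceT/laplace_pdf_cont.
- by move=> x _; exact: laplace_pdf_ge0.
Qed.
End tail.

Section prob.
Context {R : realType} {d} {T : measurableType d} {P : probability T R}.

Lemma tail_up (X : {RV P >-> R}) b a : 0 < b -> 0 <= a -> is_laplace X b ->
  P (X @^-1` `[a, +oo[) = (2^-1 * expR (- b^-1 * a))%:E.
Proof.
move=> b0 a0 H; rewrite -(laplace_upper _ b0 _ a0).
exact: (H _ (measurable_itv _)).
Qed.

Lemma tail_lo (X : {RV P >-> R}) b a : 0 < b -> 0 <= a -> is_laplace X b ->
  P (X @^-1` `]-oo, (- a)%R]) = (2^-1 * expR (- b^-1 * a))%:E.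
Proof.
move=> b0 a0 H; rewrite -(laplace_lower _ b0 _ a0).
exact: (H _ (measurable_itv _)).
Qed.

Lemma meas_le (f g : T -> R) : measurable_fun setT f -> measurable_fun setT g ->
  measurable [set x | f x <= g x].
Proof.
move=> mf mg.
have mt : measurable [set true] by [].
have := measurable_fun_ler mf mg measurableT mt.
rewrite setTI; exact.
Qed.

Lemma meas_lt (f g : T -> R) : measurable_fun setT f -> measurable_fun setT g ->
  measurable [set x | f x < g x].
Proof.
move=> mf mg.
have mt : measurable [set true] by [].
have := measurable_fun_ltr mf mg measurableT mt.
rewrite setTI; exact.
Qed.
End prob.

Section graph.
Context {R : realType} (V : finType) (e : rel V).

Lemma Q_le0 t : Q_del_deg R e t <= 0.
Proof.
rewrite /Q_del_deg mulNr oppr_le0 mulr_ge0 //; apply: sumr_ge0 => v hv.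
by rewrite subr_ge0 ler_nat.
Qed.

Lemma Q_max : Q_del_deg R e (maxdeg e) = 0.
Proof.
rewrite /Q_del_deg big1 ?mulr0 // => v hv.
have h : (deg e v <= maxdeg e)%N by exact: leq_bigmax.
have -> : deg e v = maxdeg e by apply/eqP; rewrite eqn_leq h hv.
by rewrite subrr.
Qed.
End graph.

Theorem mainTheorem3 (R : realType) (V : finType) (e : rel V) (eps beta : R)
    (d : measure_display) (T : measurableType d) (P : probability T R)
    (W : nat -> {RV P >-> R}) :
  simple_graph e -> (exists u v : V, e u v) ->
  0 < eps -> 0 < beta -> beta < 1 ->
  mutually_independent W ->
  (forall i : nat, is_laplace (W i) (2 / eps)) ->
  ((1 - beta)%:E <=
     P [set om : T | exists tau : nat,
          [/\ svt_outputs e eps beta (fun i => W i om) tau,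
              (tau <= maxdeg e)%N
            & (`|Q_del_deg R e tau|
                <= 4 / eps * ln (maxdeg e)%:R + 8 / eps * ln (2 / beta))%R]])%E.
Proof.
move=> _ [u [v euv]] eps0 beta0 beta1 _ Hlap.
set D := maxdeg e.
have D0 : (0 < D)%N.
  have h : (0 < deg e u)%N by rewrite /deg; apply/card_gt0P; exists v; rewrite inE.
  apply: (leq_trans h); exact: leq_bigmax.
set L := ln (2 / beta).
have L0 : 0 <= L by rewrite /L ln_ge0 // ler_pdivlMr // mul1r; lra.
set al := 2 / eps * L.
have al0 : 0 <= al by rewrite /al mulr_ge0 // divr_ge0 // ltW.
set g := al + 4 / eps * ln D%:R.
have lnD0 : 0 <= ln (D%:R : R) by rewrite ln_ge0 // ler1n.
have g0 : 0 <= g by rewrite /g addr_ge0 // mulr_ge0 // divr_ge0 // ltW.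
set bz := 2 / eps.
have bz0 : 0 < bz by rewrite /bz divr_gt0.
have thrE : svt_threshold eps beta = - (2 * al).
  by rewrite /svt_threshold -/L /al; ring.
have Eal : 2^-1 * expR (- bz^-1 * al) = beta / 4.
  have -> : - bz^-1 * al = - L by rewrite /al /bz; field; lra.
  rewrite expRN /L lnK; last by rewrite posrE divr_gt0.
  by field; lra.
have Eg : 2^-1 * expR (- bz^-1 * g) = beta / 4 / (D%:R ^+ 2).
  have -> : - bz^-1 * g = - L + - (2%:R * ln D%:R) by rewrite /g /al /bz; field; lra.
  have Dp : 0 < (D%:R : R) by rewrite ltr0n.
  rewrite expRD !expRN expRM_natl /L !lnK ?posrE ?divr_gt0 //.
  by field; rewrite gt_eqF //= gt_eqF.
pose F0 := W 0%N @^-1` `[al, +oo[.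
pose F1 := W 0%N @^-1` `]-oo, - al].
pose F2 := W D @^-1` `]-oo, - al].
pose G i := W i.+1 @^-1` `[g, +oo[.
pose BU := \big[setU/set0]_(i < D) G i.
pose bad := ((F0 `|` F1) `|` F2) `|` BU.
have mG i : measurable (G i) by apply: measurable_funPTI; exact: measurable_itv.
have mBU : measurable BU by apply: bigsetU_measurable => i _.
have mF0 : measurable F0 by apply: measurable_funPTI; exact: measurable_itv.
have mF1 : measurable F1 by apply: measurable_funPTI; exact: measurable_itv.
have mF2 : measurable F2 by apply: measurable_funPTI; exact: measurable_itv.
have mbad : measurable bad by rewrite /bad; do 3 apply: measurableU => //.
have PF0 : P F0 = (beta / 4)%:E by rewrite /F0 (tail_up _ _ _ bz0 al0 (Hlap 0%N)) Eal.
have PF1 : P F1 = (beta / 4)%:E by rewrite /F1 (tail_lo _ _ _ bz0 al0 (Hlap 0%N)) Eal.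
have PF2 : P F2 = (beta / 4)%:E by rewrite /F2 (tail_lo _ _ _ bz0 al0 (Hlap D)) Eal.
have PG i : P (G i) = (beta / 4 / (D%:R ^+ 2))%:E.
  by rewrite /G (tail_up _ _ _ bz0 g0 (Hlap i.+1)) Eg.
have PBU : (P BU <= (D%:R * (beta / 4 / (D%:R ^+ 2)))%:E)%E.
  apply: (le_trans (@content_subadditive _ _ _ P BU G D (fun k _ => mG k) mBU (@subset_refl _ _))).
  rewrite (eq_bigr (fun=> (beta / 4 / (D%:R ^+ 2))%:E)); last by move=> i _; exact: PG.
  by rewrite sumEFin sumr_const card_ord mulr_natl.
have Pbad : (P bad <= beta%:E)%E.
  have m01 : measurable (F0 `|` F1) by exact: measurableU.
  have m012 : measurable (F0 `|` F1 `|` F2) by exact: measurableU.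
  apply: (le_trans (measureU2 P m012 mBU)).
  apply: (le_trans (leeD (measureU2 P m01 mF2) PBU)).
  apply: (le_trans (leeD (leeD (measureU2 P mF0 mF1) (lexx _)) (lexx _))).
  have E0 : (P F0 <= (beta/4)%:E)%E by rewrite PF0.
  have E1 : (P F1 <= (beta/4)%:E)%E by rewrite PF1.
  have E2 : (P F2 <= (beta/4)%:E)%E by rewrite PF2.
  apply: (le_trans (leeD (leeD (leeD E0 E1) E2) (lexx _))).
  rewrite -!EFinD lee_fin.
  have Dp : 1 <= (D%:R : R) by rewrite ler1n.
  have -> : D%:R * (beta / 4 / D%:R ^+ 2) = beta / 4 / D%:R.
    by field; rewrite gt_eqF // (lt_le_trans _ Dp).
  have : beta / 4 / D%:R <= beta / 4.
    by rewrite ler_pdivrMr ?(lt_le_trans _ Dp) // ler_peMr // divr_ge0 // ltW.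
  lra.
set thr := svt_threshold eps beta.
match goal with |- is_true (Order.le _ (_ ?X)) => set Ev := X end.
pose I := [set t : nat | [/\ (0 < t)%N, (t <= D)%N &
   `|Q_del_deg R e t| <= 4 / eps * ln D%:R + 8 / eps * L]].
pose A t := \bigcap_(s in [set s : nat | (0 < s)%N /\ (s < t)%N])
   [set om | Q_del_deg R e s + W s om <= thr + W 0%N om].
pose B t := [set om | thr + W 0%N om < Q_del_deg R e t + W t om].
have mE : measurable Ev.
  have -> : Ev = \bigcup_(t in I) (A t `&` B t).
    rewrite /Ev /svt_outputs /=; apply/seteqP; split => om /=.
    - move=> [t [[t0 hlt hgt] tD hb]]; exists t => //; split => //.
      by move=> s [s0 st]; exact: hlt s s0 st.
    - move=> [t [t0 tD hb] [hA hB]]; exists t; split => //; split => //.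
      by move=> s s0 st; exact: hA s (conj s0 st).
  apply: bigcup_measurable => t _; apply: measurableI.
  - apply: bigcap_measurableType => s _; apply: meas_le.
    + by apply: measurable_funD.
    + by apply: measurable_funD.
  - apply: meas_lt.
    + by apply: measurable_funD.
    + by apply: measurable_funD.
have sub : ~` bad `<=` Ev.
  move=> om Hg.
  have h0u : W 0%N om < al.
    rewrite ltNge; apply/negP => h; apply: Hg; left; left; left.
    by rewrite /F0 /= in_itv /= h.
  have h0l : - al < W 0%N om.
    rewrite ltNge; apply/negP => h; apply: Hg; left; left; right.
    by rewrite /F1 /= in_itv /= h.
  have hD : - al < W D om.
    rewrite ltNge; apply/negP => h; apply: Hg; left; right.
    by rewrite /F2 /= in_itv /= h.
  have hG : forall t, (0 < t)%N -> (t <= D)%N -> W t om < g.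
    move=> t t0 tD; rewrite ltNge; apply/negP => h; apply: Hg; right.
    rewrite /BU -bigcup_mkord; exists t.-1; first by rewrite /= prednK.
    by rewrite /G prednK //= in_itv /= h.
  have ex : exists t, (0 < t)%N && (thr + W 0%N om < Q_del_deg R e t + W t om).
    exists D; rewrite D0 /= Q_max add0r /thr thrE; lra.
  case: (ex_minnP ex) => t /andP[t0 ht] tmin.
  have tD : (t <= D)%N.
    by apply: tmin; rewrite D0 /= Q_max add0r /thr thrE; lra.
  exists t; split => //.
  - rewrite /svt_outputs /=; split => // s s0 st.
    rewrite leNgt; apply/negP => hs.
    have := tmin s; rewrite s0 hs => /(_ isT); rewrite leqNgt st.
    by [].
  - have hq := @Q_le0 R V e t.
    rewrite ler0_norm //.
    have := hG t t0 tD.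
    move: ht; rewrite /thr thrE /g => ht hGt.
    have e8 : 8 / eps * L = 4 * al by rewrite /al; ring.
    rewrite e8; lra.
have Pbf : P bad = (fine (P bad))%:E.
  by rewrite fineK // ge0_fin_numE // (le_lt_trans Pbad) // ltry.
have hle : (P (~` bad) <= P Ev)%E by apply: le_measure => //; rewrite inE //; exact: measurableC.
apply: le_trans hle.
rewrite probability_setC // Pbf -EFinB lee_fin.
move: Pbad; rewrite Pbf lee_fin; lra.
Qed.
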